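(* Let $G$ be a compactly generated totally disconnected locally compact group and $N$ a closed normal subgroup of $G$. If there is a Cayley-Abels graph $\Gamma$ for $G$ such that $\deg(\Gamma/N)=\deg(\Gamma)$, then there exists a compact normal subgroup $L$ of $G$ acting trivially on $\Gamma$ such that $L$ is an open subgroup of $N$.
   Context: Graphs $\Gamma=(V,E,o,r)$ have directed edges with initial-vertex map $o$ and involutive reversal $e\mapsto\bar e$; $\deg(v)=|o^{-1}(v)|$, $\deg(\Gamma)=\sup_v\deg(v)$. For $N$ acting on $\Gamma$, $\Gamma/N$ is the quotient graph whose vertices and edges are the $N$-orbits of vertices and edges, with $o(Ne)=No(e)$, $\overline{Ne}=N\bar e$. A Cayley-Abels graph for a totally disconnected locally compact group $G$ is a connected graph of finite degree on which $G$ acts vertex-transitively by automorphisms with compact open vertex stabilizers. *)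

(* Defs.v *)
From Stdlib Require Import List Arith.
Import ListNotations.
Set Implicit Arguments.

Definition is_topology (X : Type) (op : (X -> Prop) -> Prop) : Prop :=
  op (fun _ => True) /\
  (forall F : (X -> Prop) -> Prop, (forall U, F U -> op U) ->
      op (fun x => exists U, F U /\ U x)) /\
  (forall U V, op U -> op V -> op (fun x => U x /\ V x)).

Definition prod_open (X Y : Type) (opX : (X -> Prop) -> Prop)
  (opY : (Y -> Prop) -> Prop) (W : X * Y -> Prop) : Prop :=
  forall p, W p -> exists U V, opX U /\ opY V /\ U (fst p) /\ V (snd p) /\
     (forall x y, U x -> V y -> W (x, y)).

Definition continuous (X Y : Type) (opX : (X -> Prop) -> Prop)
  (opY : (Y -> Prop) -> Prop) (f : X -> Y) : Prop :=
  forall V, opY V -> opX (fun x => V (f x)).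

Record topgroup := TopGroup {
  tg :> Type;
  tmul : tg -> tg -> tg;
  tone : tg;
  tinv : tg -> tg;
  topen : (tg -> Prop) -> Prop;
  tmulA : forall x y z, tmul x (tmul y z) = tmul (tmul x y) z;
  tmul1g : forall x, tmul tone x = x;
  tmulg1 : forall x, tmul x tone = x;
  tmulVg : forall x, tmul (tinv x) x = tone;
  tmulgV : forall x, tmul x (tinv x) = tone;
  ttopology : is_topology topen;
  tmul_cont : continuous (prod_open topen topen) topen
                 (fun p => tmul (fst p) (snd p));
  tinv_cont : continuous topen topen tinv
}.

Section TopGroupDefs.
Variable G : topgroup.

Definition is_open (U : G -> Prop) : Prop := topen G U.
Definition is_closed (C : G -> Prop) : Prop := is_open (fun x => ~ C x).

Definition compact (K : G -> Prop) : Prop :=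
  forall F : (G -> Prop) -> Prop,
    (forall U, F U -> is_open U) ->
    (forall x, K x -> exists U, F U /\ U x) ->
    exists l : list (G -> Prop),
      (forall U, In U l -> F U) /\ (forall x, K x -> exists U, In U l /\ U x).

Definition connected_subset (S : G -> Prop) : Prop :=
  ~ exists U V, is_open U /\ is_open V /\
      (forall x, S x -> U x \/ V x) /\
      (exists x, S x /\ U x) /\ (exists x, S x /\ V x) /\
      (forall x, S x -> U x -> V x -> False).

Definition totally_disconnected : Prop :=
  forall S, connected_subset S -> forall x y, S x -> S y -> x = y.

Definition locally_compact : Prop :=
  forall x, exists U K, is_open U /\ U x /\ (forall y, U y -> K y) /\ compact K.

Definition tdlc : Prop := totally_disconnected /\ locally_compact.

Definition subgroup (H : G -> Prop) : Prop :=
  H (tone G) /\ (forall x y, H x -> H y -> H (tmul G x y)) /\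
  (forall x, H x -> H (tinv G x)).

Definition normal_subgroup (H : G -> Prop) : Prop :=
  subgroup H /\ forall g x, H x -> H (tmul G (tmul G g x) (tinv G g)).

Definition generates (K : G -> Prop) : Prop :=
  forall H, subgroup H -> (forall x, K x -> H x) -> forall x, H x.

Definition compactly_generated : Prop :=
  exists K, compact K /\ generates K.

Definition open_in (N L : G -> Prop) : Prop :=
  exists U, is_open U /\ forall x, L x <-> (U x /\ N x).

End TopGroupDefs.
Arguments is_open {G} U.
Arguments is_closed {G} C.
Arguments compact {G} K.
Arguments subgroup {G} H.
Arguments normal_subgroup {G} H.
Arguments open_in {G} N L.

Record graph := Graph {
  V : Type;
  E : Type;
  o : E -> V;
  rev : E -> E;
  rev_inv : forall e, rev (rev e) = e
}.

Arguments o {_} _.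
Arguments rev {_} _.
Definition r {Γ : graph} (e : E Γ) : V Γ := o (rev e).

Inductive reach {Γ : graph} (v : V Γ) : V Γ -> Prop :=
| reach_refl : reach v v
| reach_step : forall e, reach v (o e) -> reach v (r e).

Definition connected (Γ : graph) : Prop :=
  (exists v : V Γ, True) /\ forall v w : V Γ, reach v w.

Definition has_card (T : Type) (P : T -> Prop) (n : nat) : Prop :=
  exists l : list T, NoDup l /\ length l = n /\ forall x, P x <-> In x l.

Definition vdeg {Γ : graph} (v : V Γ) (n : nat) : Prop :=
  has_card (fun e : E Γ => o e = v) n.

Definition graph_degree (Γ : graph) (d : nat) : Prop :=
  (forall v : V Γ, exists n, vdeg v n /\ n <= d) /\ (exists v : V Γ, vdeg v d).

Definition finite_degree (Γ : graph) : Prop := exists d, graph_degree Γ d.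

Record gaction (G : topgroup) (Γ : graph) := GAction {
  actV : G -> V Γ -> V Γ;
  actE : G -> E Γ -> E Γ;
  actV1 : forall v, actV (tone G) v = v;
  actVM : forall g h v, actV (tmul G g h) v = actV g (actV h v);
  actE1 : forall e, actE (tone G) e = e;
  actEM : forall g h e, actE (tmul G g h) e = actE g (actE h e);
  act_o : forall g e, o (actE g e) = actV g (o e);
  act_rev : forall g e, rev (actE g e) = actE g (rev e)
}.

Section ActionDefs.
Variables (G : topgroup) (Γ : graph) (A : gaction G Γ).

Definition stabilizer (v : V Γ) : G -> Prop := fun g => actV A g v = v.

Definition cayley_abels : Prop :=
  connected Γ /\ finite_degree Γ /\
  (forall v w, exists g, actV A g v = w) /\
  (forall v, is_open (stabilizer v) /\ compact (stabilizer v)).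

Definition acts_trivially (L : G -> Prop) : Prop :=
  forall g, L g -> (forall v, actV A g v = v) /\ (forall e, actE A g e = e).

(* quotient graph Γ/N : vertices are N-orbits of vertices, edges are N-orbits
   of edges, o(Ne) = N o(e). *)
Definition same_orbitV (N : G -> Prop) (v w : V Γ) : Prop :=
  exists g, N g /\ actV A g v = w.
Definition same_orbitE (N : G -> Prop) (e f : E Γ) : Prop :=
  exists g, N g /\ actE A g e = f.

(* the quotient vertex N v has degree n: there are exactly n N-orbits of
   edges Ne with o(Ne) = Nv *)
Definition qvdeg (N : G -> Prop) (v : V Γ) (n : nat) : Prop :=
  exists l : list (E Γ), length l = n /\
    (forall e, In e l -> same_orbitV N (o e) v) /\
    ForallOrdPairs (fun e f => ~ same_orbitE N e f) l /\
    (forall e, same_orbitV N (o e) v -> exists f, In f l /\ same_orbitE N e f).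

Definition quotient_degree (N : G -> Prop) (d : nat) : Prop :=
  (forall v, exists n, qvdeg N v n /\ n <= d) /\ (exists v, qvdeg N v d).

End ActionDefs.

(* Main.v *)
Require Import Defs.
From Stdlib Require Import List Arith.
From Stdlib Require Import Classical ClassicalEpsilon Lia.

Lemma tinv_inv (G : topgroup) (x : G) : tinv G (tinv G x) = x.
Proof.
  rewrite <- (tmulg1 G (tinv G (tinv G x))).
  rewrite <- (tmulVg G x). rewrite tmulA. rewrite tmulVg. apply tmul1g.
Qed.

Lemma actE_inv G Γ (A : gaction G Γ) g e : actE A (tinv G g) (actE A g e) = e.
Proof. rewrite <- actEM, tmulVg. apply actE1. Qed.
Lemma actV_inv G Γ (A : gaction G Γ) g v : actV A (tinv G g) (actV A g v) = v.
Proof. rewrite <- actVM, tmulVg. apply actV1. Qed.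
Lemma actV_inv' G Γ (A : gaction G Γ) g v : actV A g (actV A (tinv G g) v) = v.
Proof. rewrite <- actVM, tmulgV. apply actV1. Qed.

Lemma orbE_sym G Γ (A:gaction G Γ) N (HN: subgroup N) e f :
  same_orbitE A N e f -> same_orbitE A N f e.
Proof.
  intros [c [Hc Hf]]. destruct HN as [_ [_ Hi]]. exists (tinv G c). split; auto.
  subst f. apply actE_inv.
Qed.

Lemma FOP_nodup T (R : T -> T -> Prop) l :
  ForallOrdPairs R l -> (forall x, ~ R x x) -> NoDup l.
Proof.
  induction 1 as [|x l Hx Hl IH]; intros Hr; constructor; auto.
  intro Hin. rewrite Forall_forall in Hx. exact (Hr x (Hx x Hin)).
Qed.

Lemma FOP_in T (R : T -> T -> Prop) l : ForallOrdPairs R l ->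
  forall a b, In a l -> In b l -> a <> b -> R a b \/ R b a.
Proof.
  induction 1 as [|x l Hx Hl IH]; simpl; intros a b Ha Hb Hab; [contradiction|].
  rewrite Forall_forall in Hx.
  destruct Ha as [<-|Ha]; destruct Hb as [<-|Hb].
  - congruence.
  - left; auto.
  - right; auto.
  - auto.
Qed.

Lemma FOP_map T U (R : T -> T -> Prop) (R' : U -> U -> Prop) (f : T -> U) l :
  ForallOrdPairs R l -> (forall a b, In a l -> In b l -> R a b -> R' (f a) (f b)) ->
  ForallOrdPairs R' (map f l).
Proof.
  induction 1 as [|x l Hx Hl IH]; simpl; intros H; constructor.
  - rewrite Forall_forall in *. intros y Hy. apply in_map_iff in Hy.
    destruct Hy as [z [<- Hz]]. apply H; auto.
  - apply IH. intros; apply H; auto.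
Qed.

Lemma key (G : topgroup) (Γ : graph) (A : gaction G Γ) (N : G -> Prop) d :
  normal_subgroup N -> (forall w w' : V Γ, exists g, actV A g w = w') ->
  graph_degree Γ d -> quotient_degree A N d ->
  forall w e f, o e = w -> o f = w -> same_orbitE A N e f -> e = f.
Proof.
  intros [HN Hnorm] Htr [Hdeg _] [_ [v0 [l [Hlen [Hlo [Hlp Hlc]]]]]] w e f He Hf Hef.
  destruct (Htr v0 w) as [g Hg].
  set (k := fun e => epsilon (inhabits (tone G)) (fun n => N n /\ actV A n (o e) = v0)).
  assert (Hk : forall e, In e l -> N (k e) /\ actV A (k e) (o e) = v0).
  { intros x Hx. unfold k. apply epsilon_spec. destruct (Hlo x Hx) as [n [Hn1 Hn2]].
    exists n; auto. }
  set (phi := fun e => actE A (tmul G g (k e)) e).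
  set (l' := map phi l).
  assert (Ho : forall x, In x l' -> o x = w).
  { intros x Hx. apply in_map_iff in Hx. destruct Hx as [y [<- Hy]]. unfold phi.
    rewrite act_o, actVM, (proj2 (Hk y Hy)). exact Hg. }
  assert (Hp : ForallOrdPairs (fun a b => ~ same_orbitE A N a b) l').
  { apply FOP_map with (R := fun a b => ~ same_orbitE A N a b); [exact Hlp|].
    intros a b Ha Hb Hab [c [Hc Heq]]. apply Hab.
    destruct (Hk a Ha) as [Ha1 _]. destruct (Hk b Hb) as [Hb1 _].
    exists (tmul G (tinv G (k b)) (tmul G (tmul G (tinv G g) (tmul G c g)) (k a))).
    destruct HN as [_ [Hm Hi]].
    split.
    - apply Hm. apply Hi; auto. apply Hm; auto.
      pose proof (Hnorm (tinv G g) c Hc) as Hc'. rewrite tinv_inv, <- tmulA in Hc'. exact Hc'.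
    - unfold phi in Heq. rewrite !actEM in Heq. rewrite !actEM, Heq, !actE_inv. reflexivity. }
  assert (Hnd : NoDup l').
  { apply (@FOP_nodup _ _ _ Hp). intros x Hx. apply Hx. exists (tone G). split.
    - apply HN.
    - apply actE1. }
  destruct (Hdeg w) as [n [[kk [Hkk1 [Hkk2 Hkk3]]] Hn]].
  assert (Hinc : incl l' kk). { intros x Hx. apply Hkk3. auto. }
  assert (Hinc2 : incl kk l').
  { apply NoDup_length_incl; auto. unfold l'. rewrite length_map. lia. }
  assert (Hel : In e l') by (apply Hinc2, Hkk3; auto).
  assert (Hfl : In f l') by (apply Hinc2, Hkk3; auto).
  destruct (classic (e = f)) as [|Hne]; auto.
  destruct (@FOP_in _ _ _ Hp _ _ Hel Hfl Hne) as [Hx|Hx]; exfalso; apply Hx; auto.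
  apply orbE_sym; auto.
Qed.

Lemma filter_cover (X : Type) (F : (X -> Prop) -> Prop) (l : list (X -> Prop)) :
  exists l', (forall U, In U l' -> F U) /\ (forall U, In U l -> F U -> In U l').
Proof.
  induction l as [|U l [l' [H1 H2]]].
  - exists nil; simpl; tauto.
  - destruct (classic (F U)) as [HU|HU].
    + exists (U :: l'). simpl. split.
      * intros V [<-|HV]; auto.
      * intros V [<-|HV] HF; auto.
    + exists l'. split; auto. intros V [<-|HV] HF; [contradiction|auto].
Qed.

Theorem mainTheorem5 (G : topgroup) (N : G -> Prop) (Γ : graph)
  (A : gaction G Γ) :
  tdlc G -> compactly_generated G ->
  normal_subgroup N -> is_closed N ->
  cayley_abels A ->
  (exists d, graph_degree Γ d /\ quotient_degree A N d) ->
  exists L : G -> Prop,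
    normal_subgroup L /\ compact L /\ acts_trivially A L /\
    (forall g, L g -> N g) /\ open_in N L.
Proof.
  intros Htd Hcg HNn HNc [Hconn [Hfd [Htr Hstab]]] [d [Hgd Hqd]].
  pose proof (@key _ _ A N d HNn Htr Hgd Hqd) as K.
  destruct Hconn as [[b _] Hreach].
  destruct HNn as [HN Hnorm]. destruct HN as [HN1 [HNm HNi]].
  assert (Fix : forall g, N g -> actV A g b = b ->
            (forall v, actV A g v = v) /\ (forall e, actE A g e = e)).
  { intros g Hg Hb.
    assert (HE : forall e, actV A g (o e) = o e -> actE A g e = e).
    { intros e He. symmetry. apply (K (o e) e (actE A g e));
        [reflexivity | rewrite act_o; auto | exists g; auto]. }
    assert (HV : forall v, actV A g v = v).
    { intro v. induction (Hreach b v) as [|e Hr IH]; auto.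
      unfold r. rewrite <- act_o, <- act_rev, (HE e IH). reflexivity. }
    split; auto. }
  destruct (Hstab b) as [Hso Hsc].
  exists (fun g => N g /\ (forall v, actV A g v = v) /\ (forall e, actE A g e = e)).
  refine (conj _ (conj _ (conj _ (conj _ _)))).
  - split; [split; [|split]|].
    + split; auto. split; intros; [apply actV1|apply actE1].
    + intros x y [Hx [Hxv Hxe]] [Hy [Hyv Hye]]. split; auto.
      split; intros; [rewrite actVM, Hyv, Hxv | rewrite actEM, Hye, Hxe]; reflexivity.
    + intros x [Hx [Hxv Hxe]]. split; auto. split; intros.
      * transitivity (actV A (tinv G x) (actV A x v)); [rewrite Hxv; auto | apply actV_inv].
      * transitivity (actE A (tinv G x) (actE A x e)); [rewrite Hxe; auto | apply actE_inv].
    + intros g x [Hx [Hxv Hxe]]. split; auto. split; intros.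
      * rewrite !actVM, Hxv. apply actV_inv'.
      * rewrite !actEM, Hxe, <- actEM, tmulgV. apply actE1.
  - intros F HFo Hcov.
    destruct (Hsc (fun U => F U \/ U = (fun x => ~ N x))) as [l [Hl1 Hl2]].
    + intros U [HU|HU]; auto. subst U. exact HNc.
    + intros x Hx. destruct (classic (N x)) as [HNx|HNx].
      * destruct (Hcov x) as [U [HU HUx]]. { exact (conj HNx (Fix x HNx Hx)). }
        exists U; auto.
      * exists (fun x => ~ N x); auto.
    + destruct (@filter_cover _ F l) as [l' [H1 H2]].
      exists l'. split; auto. intros x [Hx [Hv He]].
      destruct (Hl2 x (Hv b)) as [U [HU HUx]].
      destruct (Hl1 U HU) as [HF|HE].
      * exists U; split; auto.
      * subst U. contradiction.
  - intros g [_ H]; exact H.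
  - intros g H; apply H.
  - exists (stabilizer A b). split; auto. intros x; split.
    + intros [Hx [Hv _]]; split; auto. exact (Hv b).
    + intros [Hs Hx]. exact (conj Hx (Fix x Hx Hs)).
Qed.
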